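(* Consider the online firefighter game on the infinite square grid $\mathbb{L}_2=\mathbb{Z}\times\mathbb{Z}$ (described in the context). There is an online strategy for Player 1 that wins against every firefighter sequence $(f_i)_{i\geq 1}$ revealed by Player 2 for which there exists $N\geq 1$ with $\sum_{i=1}^N f_i\geq 16\cdot N$.
   Context: The grid $\mathbb{L}_2$ has vertex set $\mathbb{Z}\times\mathbb{Z}$, with $(x,y)$ adjacent to $(x',y')$ iff $|x-x'|+|y-y'|=1$. A fire starts at an ignition vertex $v$ at time $0$ (so $v$ is burning). A firefighter sequence is a sequence $(f_i)_{i\geq 1}$ of non-negative integers. At each turn $i\geq 1$: Player 1 chooses at most $f_i$ vertices that are neither burning nor protected and protects them; then the fire spreads from every burning vertex to all of its unprotected neighbours. Once a vertex is burning or protected it remains so forever; unused firefighters are not carried over. Player 2 wins if at every turn some new vertex starts burning; otherwise Player 1 wins (the fire is contained). In the online version the sequence is chosen by Player 2 and revealed turn by turn: at turn $i$ Player 2 reveals $f_i$ to Player 1 just before Player 1 places firefighters, so an online strategy of Player 1 chooses its moves at turn $i$ based only on $f_1,\dots,f_i$ and the history of the game so far (in particular without knowing $N$ in advance). *)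

(* Defs.v *)
From Stdlib Require Import ZArith List.
Import ListNotations.
Open Scope Z_scope.

Definition vertex : Type := (Z * Z)%type.

Definition adj (u w : vertex) : Prop :=
  Z.abs (fst u - fst w) + Z.abs (snd u - snd w) = 1.

(* A firefighter sequence (f_i)_{i>=1} is f : nat -> nat; f 0 is unused. *)
Definition prefix (f : nat -> nat) (n : nat) : list nat := map f (seq 1 n).

(* An online strategy: given the ignition vertex and the revealed values
   f_1,...,f_i, it returns the list of vertices to protect at turn i.
   Since the game is deterministic given Player 1's own moves, the whole
   history is a function of these data, so this captures all online
   strategies. *)
Definition strategy : Type := vertex -> list nat -> list vertex.

Fixpoint state (s : strategy) (v : vertex) (f : nat -> nat) (i : nat)
  : (vertex -> Prop) * (vertex -> Prop) :=
  match i with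
  | O => (fun x => x = v, fun _ => False)
  | S j =>
      let (B, P) := state s v f j in
      let L := s v (prefix f (S j)) in
      let P' := fun x => P x \/ In x L in
      (fun x => B x \/ (~ P' x /\ exists u, B u /\ adj u x), P')
  end.

Definition burning s v f i := fst (state s v f i).
Definition protected s v f i := snd (state s v f i).

Definition legal_move (s : strategy) (v : vertex) (f : nat -> nat) (i : nat) : Prop :=
  let L := s v (prefix f i) in
  (length L <= f i)%nat /\
  forall x, In x L -> ~ burning s v f (i - 1) x /\ ~ protected s v f (i - 1) x.

Definition p1_wins (s : strategy) (v : vertex) (f : nat -> nat) : Prop :=
  exists i : nat, (1 <= i)%nat /\
    forall x, burning s v f i x -> burning s v f (i - 1) x.

Definition psum (f : nat -> nat) (N : nat) : nat := list_sum (prefix f N).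

(* Main.v *)
Require Import Defs.
From Stdlib Require Import ZArith List Lia Classical.
Import ListNotations.
Open Scope Z_scope.

Definition vplus (v d : vertex) : vertex := (fst v + fst d, snd v + snd d).
Definition dist (x v : vertex) : Z := Z.abs (fst x - fst v) + Z.abs (snd x - snd v).
Definition quad (c a b : Z) : vertex :=
  if c =? 0 then (a,b) else if c =? 1 then (b,-a) else if c =? 2 then (-a,-b) else (-b,a).
Definition rad (m : Z) : Z := 2 ^ Z.log2 (m+1).
Definition D (p : nat) : vertex :=
  let pz := Z.of_nat p in let m := pz / 4 in
  quad (pz mod 4) (m + 1 - rad m) (2 * rad m - m - 1).
Definition Rr (i : nat) : Z := 2 ^ Z.log2_up (Z.of_nat i).
Definition st (i : nat) : nat := Z.to_nat (4 * (Rr i - 1)).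

Lemma rad_spec m : 0 <= m -> 1 <= rad m /\ rad m <= m+1 /\ m+1 < 2 * rad m.
Proof.
  intros H. unfold rad. pose proof (Z.log2_spec (m+1) ltac:(lia)).
  pose proof (Z.log2_nonneg (m+1)). rewrite Z.pow_succ_r in H0 by lia. lia.
Qed.

Lemma c4 c : 0 <= c < 4 -> c = 0 \/ c = 1 \/ c = 2 \/ c = 3.
Proof. lia. Qed.

Lemma quad_norm c a b : 0 <= c < 4 -> 0 <= a -> 0 < b ->
  Z.abs (fst (quad c a b)) + Z.abs (snd (quad c a b)) = a + b.
Proof. intros Hc Ha Hb. destruct (c4 c Hc) as [ -> | [ -> | [ -> | -> ]]]; simpl; lia. Qed.

Lemma quad_inj c a b c' a' b' : 0 <= c < 4 -> 0 <= a -> 0 < b ->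
  0 <= c' < 4 -> 0 <= a' -> 0 < b' -> quad c a b = quad c' a' b' ->
  c = c' /\ a = a' /\ b = b'.
Proof.
  intros Hc Ha Hb Hc' Ha' Hb' E.
  destruct (c4 c Hc) as [ -> | [ -> | [ -> | -> ]]]; destruct (c4 c' Hc') as [ -> | [ -> | [ -> | -> ]]];
  simpl in E; injection E; lia.
Qed.

Lemma D_norm p : Z.abs (fst (D p)) + Z.abs (snd (D p)) = rad (Z.of_nat p / 4).
Proof.
  unfold D. set (pz := Z.of_nat p).
  assert (0 <= pz / 4) by (apply Z.div_pos; lia).
  pose proof (rad_spec _ H).
  rewrite quad_norm; try lia; apply Z.mod_pos_bound; lia.
Qed.

Lemma D_inj p p' : D p = D p' -> p = p'.
Proof.
  unfold D. set (pz := Z.of_nat p). set (pz' := Z.of_nat p'). intros E.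
  assert (0 <= pz / 4) by (apply Z.div_pos; lia).
  assert (0 <= pz' / 4) by (apply Z.div_pos; lia).
  pose proof (rad_spec _ H). pose proof (rad_spec _ H0).
  pose proof (Z.mod_pos_bound pz 4 ltac:(lia)).
  pose proof (Z.mod_pos_bound pz' 4 ltac:(lia)).
  pose proof (Z.div_mod pz 4 ltac:(lia)).
  pose proof (Z.div_mod pz' 4 ltac:(lia)).
  apply quad_inj in E; [|lia..].
  assert (pz = pz') by lia. unfold pz, pz' in *. lia.
Qed.

Lemma Rr_spec i : Z.of_nat i <= Rr i /\ 1 <= Rr i /\ ((1 <= i)%nat -> Rr i < 2 * Z.of_nat i).
Proof.
  unfold Rr. destruct (Z.le_gt_cases (Z.of_nat i) 1).
  - rewrite Z.log2_up_eqn0 by lia. rewrite Z.pow_0_r. lia.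
  - pose proof (Z.log2_up_spec _ H). pose proof (Z.log2_up_pos _ H).
    assert (E : 2 ^ Z.log2_up (Z.of_nat i) = 2 * 2 ^ Z.pred (Z.log2_up (Z.of_nat i))).
    { rewrite <- Z.pow_succ_r by lia. f_equal; lia. }
    rewrite E in *.
    assert (0 < 2 ^ Z.pred (Z.log2_up (Z.of_nat i))) by (apply Z.pow_pos_nonneg; lia).
    lia.
Qed.

Lemma Rr_mono i j : (i <= j)%nat -> Rr i <= Rr j.
Proof.
  intros. unfold Rr. apply Z.pow_le_mono_r; [lia|]. apply Z.log2_up_le_mono. lia.
Qed.

Lemma st_mono i j : (i <= j)%nat -> (st i <= st j)%nat.
Proof. intros. unfold st. pose proof (Rr_mono i j H). lia. Qed.

Lemma D_far i p : (st i <= p)%nat -> Z.of_nat i <= rad (Z.of_nat p / 4).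
Proof.
  intros H. unfold st in H. destruct (Rr_spec i) as [H1 [H2 _]].
  set (pz := Z.of_nat p) in *.
  pose proof (Z.mod_pos_bound pz 4 ltac:(lia)).
  pose proof (Z.div_mod pz 4 ltac:(lia)).
  assert (Rr i <= pz / 4 + 1) by lia.
  enough (Rr i <= rad (pz / 4)) by lia.
  unfold rad, Rr in *. apply Z.pow_le_mono_r; [lia|].
  apply Z.log2_le_mono in H4. rewrite Z.log2_pow2 in H4 by apply Z.log2_up_nonneg. exact H4.
Qed.

Lemma D_at N c a : 0 <= c < 4 -> 0 <= a < Rr N ->
  D (Z.to_nat (4 * (Rr N - 1 + a) + c)) = quad c a (Rr N - a).
Proof.
  intros Hc Ha. destruct (Rr_spec N) as [_ [H1 _]]. unfold D.
  rewrite Z2Nat.id by lia.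
  set (m := Rr N - 1 + a).
  assert (E1 : (4 * m + c) / 4 = m).
  { pose proof (Z.mod_pos_bound (4*m+c) 4 ltac:(lia)).
    pose proof (Z.div_mod (4*m+c) 4 ltac:(lia)). lia. }
  assert (E2 : (4 * m + c) mod 4 = c).
  { pose proof (Z.mod_pos_bound (4*m+c) 4 ltac:(lia)).
    pose proof (Z.div_mod (4*m+c) 4 ltac:(lia)). lia. }
  rewrite E1, E2.
  assert (E3 : rad m = Rr N).
  { unfold rad, Rr in *. f_equal. apply Z.log2_unique. apply Z.log2_up_nonneg.
    rewrite Z.pow_succ_r by apply Z.log2_up_nonneg. unfold m. lia. }
  rewrite E3. f_equal; unfold m; lia.
Qed.

Lemma sphere_cover N x v : (1 <= N)%nat -> dist x v = Rr N ->
  exists p, (st N <= p)%nat /\ (p < 16 * N)%nat /\ x = vplus v (D p).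
Proof.
  intros HN Hd. destruct (Rr_spec N) as [H1 [H2 H3]]. specialize (H3 HN).
  unfold dist in Hd. destruct x as [x1 x2]. destruct v as [v1 v2]. simpl in Hd.
  set (dx := x1 - v1) in *. set (dy := x2 - v2) in *.
  assert (G : exists c a, 0 <= c < 4 /\ 0 <= a < Rr N /\ quad c a (Rr N - a) = (dx, dy)).
  { destruct (Z.le_gt_cases 0 dx); destruct (Z.le_gt_cases 0 dy).
    - destruct (Z.eq_dec dy 0).
      + exists 1, 0. split; [lia|split;[lia|]]. unfold quad; simpl. f_equal; lia.
      + exists 0, dx. split; [lia|split;[lia|]]. unfold quad; simpl. f_equal; lia.
    - destruct (Z.eq_dec dx 0).
      + exists 2, 0. split; [lia|split;[lia|]]. unfold quad; simpl. f_equal; lia.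
      + exists 1, (-dy). split; [lia|split;[lia|]]. unfold quad; simpl. f_equal; lia.
    - exists 3, dy. split; [lia|split;[lia|]]. unfold quad; simpl. f_equal; lia.
    - exists 2, (-dx). split; [lia|split;[lia|]]. unfold quad; simpl. f_equal; lia. }
  destruct G as (c & a & Hc & Ha & E).
  exists (Z.to_nat (4 * (Rr N - 1 + a) + c)). split; [unfold st; lia|]. split; [lia|].
  rewrite D_at by lia. rewrite E. unfold vplus; simpl. f_equal; lia.
Qed.

Fixpoint Pf (g : nat -> nat) (n : nat) : nat :=
  match n with O => O | S j => (Nat.max (Pf g j) (st (S j)) + g (S j))%nat end.
Definition qf (g : nat -> nat) (i : nat) : nat := Nat.max (Pf g (i - 1)) (st i).
Definition strat : strategy := fun v l =>
  let g := fun j => nth (j - 1) l 0%nat in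
  map (fun p => vplus v (D p)) (seq (qf g (length l)) (g (length l))).

Lemma Pf_S g j : Pf g (S j) = (qf g (S j) + g (S j))%nat.
Proof. unfold qf. simpl. replace (j - 0)%nat with j by lia. reflexivity. Qed.

Lemma Pf_mono g i j : (i <= j)%nat -> (Pf g i <= Pf g j)%nat.
Proof. induction 1; simpl; lia. Qed.

Lemma Pf_ext g h i : (forall j, (1 <= j <= i)%nat -> g j = h j) -> Pf g i = Pf h i.
Proof.
  induction i; intros H; simpl; auto.
  rewrite IHi by (intros; apply H; lia). rewrite H by lia. reflexivity.
Qed.

Lemma prefix_length f i : length (prefix f i) = i.
Proof. unfold prefix. rewrite length_map, length_seq. reflexivity. Qed.

Lemma prefix_nth f i j : (1 <= j <= i)%nat -> nth (j - 1) (prefix f i) 0%nat = f j.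
Proof.
  intros H. unfold prefix.
  rewrite (nth_indep _ 0%nat (f 0%nat)) by (rewrite length_map, length_seq; lia).
  rewrite map_nth, seq_nth by lia. f_equal. lia.
Qed.

Lemma strat_eq v f i : (1 <= i)%nat ->
  strat v (prefix f i) = map (fun p => vplus v (D p)) (seq (qf f i) (f i)).
Proof.
  intros Hi. unfold strat. cbv zeta. rewrite prefix_length.
  rewrite prefix_nth by lia. f_equal. f_equal. unfold qf. f_equal.
  apply Pf_ext. intros. apply prefix_nth. lia.
Qed.

Lemma burn_S s v f j x : burning s v f (S j) x <->
  burning s v f j x \/ (~ (protected s v f j x \/ In x (s v (prefix f (S j)))) /\
                         exists u, burning s v f j u /\ adj u x).
Proof. unfold burning, protected. simpl. destruct (state s v f j). simpl. tauto. Qed.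

Lemma prot_S s v f j x : protected s v f (S j) x <->
  protected s v f j x \/ In x (s v (prefix f (S j))).
Proof. unfold protected. simpl. destruct (state s v f j). simpl. tauto. Qed.

Lemma burn_mono s v f i j x : (i <= j)%nat -> burning s v f i x -> burning s v f j x.
Proof. induction 1; auto. intros. apply burn_S. auto. Qed.

Lemma prot_mono s v f i j x : (i <= j)%nat -> protected s v f i x -> protected s v f j x.
Proof. induction 1; auto. intros. apply prot_S. auto. Qed.

Lemma burn_dist s v f t x : burning s v f t x -> dist x v <= Z.of_nat t.
Proof.
  revert x. induction t; intros x H.
  - unfold burning in H; simpl in H. subst. unfold dist. lia.
  - apply burn_S in H. destruct H as [H | [_ [u [Hu Ha]]]].
    + apply IHt in H. lia.
    + apply IHt in Hu. unfold dist, adj in *. lia.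
Qed.

Lemma prot_char v f t x : protected strat v f t x ->
  exists j p, (1 <= j <= t)%nat /\ (qf f j <= p < Pf f j)%nat /\ x = vplus v (D p).
Proof.
  induction t; intros H.
  - unfold protected in H; simpl in H. contradiction.
  - apply prot_S in H. destruct H as [H | H].
    + destruct (IHt H) as (j & p & H1 & H2 & H3). exists j, p. split; [lia|auto].
    + rewrite strat_eq in H by lia. apply in_map_iff in H.
      destruct H as (p & Hp & Hin). apply in_seq in Hin.
      exists (S t), p. rewrite Pf_S. split; [lia|]. split; [lia|auto].
Qed.

Lemma in_strat v f j p : (1 <= j)%nat -> (qf f j <= p < Pf f j)%nat ->
  protected strat v f j (vplus v (D p)).
Proof.
  intros Hj Hp. destruct j as [|j]; [lia|]. apply prot_S. right.
  rewrite strat_eq by lia. apply in_map_iff. exists p. split; auto.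
  apply in_seq. rewrite Pf_S in Hp. lia.
Qed.

Lemma coverage f i p : (st i <= p < Pf f i)%nat ->
  exists j, (1 <= j <= i)%nat /\ (qf f j <= p < Pf f j)%nat.
Proof.
  induction i; intros H.
  - simpl in H. lia.
  - destruct (Nat.le_gt_cases (qf f (S i)) p).
    + exists (S i). rewrite Pf_S in *. split; [lia|lia].
    + unfold qf in H0. replace (S i - 1)%nat with i in H0 by lia.
      pose proof (st_mono i (S i) ltac:(lia)).
      destruct IHi as [j Hj]; [lia|]. exists j. lia.
Qed.

Lemma vplus_inj v d d' : vplus v d = vplus v d' -> d = d'.
Proof.
  destruct d, d'. unfold vplus. simpl. intros E. injection E. intros. f_equal; lia.
Qed.

Lemma dist_vplus v d : dist (vplus v d) v = Z.abs (fst d) + Z.abs (snd d).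
Proof. unfold dist, vplus. simpl. f_equal; f_equal; lia. Qed.

Lemma psum_le f N : (psum f N <= Pf f N)%nat.
Proof.
  induction N; [unfold psum, prefix; simpl; lia|].
  unfold psum, prefix in *. rewrite seq_S, map_app, list_sum_app. simpl.
  replace (1 + N)%nat with (S N) by lia. lia.
Qed.

Definition zr (lo : Z) (n : nat) : list Z := map (fun k => lo + Z.of_nat k) (seq 0 n).
Definition box (v : vertex) (R : Z) : list vertex :=
  list_prod (zr (fst v - R) (Z.to_nat (2*R+1))) (zr (snd v - R) (Z.to_nat (2*R+1))).

Lemma in_zr lo n a : lo <= a < lo + Z.of_nat n -> In a (zr lo n).
Proof.
  intros H. unfold zr. apply in_map_iff. exists (Z.to_nat (a - lo)). split; [lia|].
  apply in_seq. lia.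
Qed.

Lemma in_box v R x : 0 <= R -> dist x v <= R -> In x (box v R).
Proof.
  intros H0 H. destruct x as [a b]. unfold dist in H. simpl in H. unfold box.
  apply in_prod; apply in_zr; lia.
Qed.

Theorem theorem3 :
  exists s : strategy,
    forall (v : vertex) (f : nat -> nat),
      (forall i : nat, (1 <= i)%nat -> legal_move s v f i) /\
      ((exists N : nat, (1 <= N)%nat /\ (16 * N <= psum f N)%nat) -> p1_wins s v f).
Proof.
  exists strat. intros v f. split.
  - intros i Hi. unfold legal_move. cbv zeta. rewrite strat_eq by lia. split.
    + rewrite length_map, length_seq. lia.
    + intros x Hx. apply in_map_iff in Hx. destruct Hx as (p & <- & Hp).
      apply in_seq in Hp.
      assert (Hst : (st i <= p)%nat) by (unfold qf in Hp; lia).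
      split.
      * intros Hb. apply burn_dist in Hb. rewrite dist_vplus, D_norm in Hb.
        pose proof (D_far i p Hst). lia.
      * intros Hpr. apply prot_char in Hpr. destruct Hpr as (j & p' & H1 & H2 & H3).
        apply vplus_inj, D_inj in H3. subst p'.
        pose proof (Pf_mono f j (i - 1) ltac:(lia)). unfold qf in Hp. lia.
  - intros (N & HN & Hsum).
    destruct (Rr_spec N) as [R1 [R2 R3]]. specialize (R3 HN).
    set (R := Rr N) in *.
    assert (Hsph : forall x, dist x v = R -> protected strat v f N x).
    { intros x Hx. destruct (sphere_cover N x v HN Hx) as (p & Hp1 & Hp2 & ->).
      pose proof (psum_le f N).
      destruct (coverage f N p ltac:(lia)) as (j & Hj & Hjp).
      apply prot_mono with j; [lia|]. apply in_strat; [lia|auto]. }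
    assert (Hin : forall t x, burning strat v f t x -> dist x v <= R - 1).
    { induction t; intros x Hb.
      - unfold burning in Hb; simpl in Hb. subst. unfold dist. lia.
      - pose proof (burn_dist _ _ _ _ _ Hb) as Hd.
        apply burn_S in Hb. destruct Hb as [Hb | [Hnp [u [Hu Ha]]]]; [auto|].
        pose proof (IHt u Hu). pose proof (burn_dist _ _ _ _ _ Hu).
        assert (dist x v <= dist u v + 1) by (unfold dist, adj in *; lia).
        destruct (Z.eq_dec (dist x v) R); [|lia].
        exfalso. apply Hnp. left.
        assert (Hp : protected strat v f (S t) x).
        { apply prot_mono with N; [lia|]. apply Hsph; auto. }
        apply prot_S in Hp. destruct Hp as [Hp|Hp]; [exact Hp|].
        exfalso. apply Hnp. right. exact Hp. }
    apply NNPP. intros Hnw.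
    assert (Hl : forall M, exists l, length l = M /\ NoDup l /\
                 forall x, In x l -> burning strat v f M x).
    { induction M.
      - exists nil. split; [reflexivity|]. split; [constructor|]. intros x [].
      - destruct IHM as (l & Hlen & Hnd & Hb).
        assert (Hex : exists x, burning strat v f (S M) x /\ ~ burning strat v f M x).
        { apply NNPP. intros Hne. apply Hnw. exists (S M). split; [lia|].
          intros x Hx. replace (S M - 1)%nat with M by lia.
          apply NNPP. intros Hx'. apply Hne. exists x. auto. }
        destruct Hex as (x & Hx1 & Hx2).
        exists (x :: l). split; [simpl; lia|]. split.
        + constructor; [intros Hxl; apply Hx2; auto|auto].
        + intros y [<-|Hy]; auto. apply burn_mono with M; [lia|auto]. }
    destruct (Hl (S (length (box v R)))) as (l & Hlen & Hnd & Hb).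
    assert (Hincl : incl l (box v R)).
    { intros x Hx. apply in_box; [lia|]. pose proof (Hin _ _ (Hb x Hx)). lia. }
    pose proof (NoDup_incl_length Hnd Hincl). lia.
Qed.
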